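(* Let $p$ be a prime, let $G$ be a finite group of $p$-power order, let $\varphi\colon A\to B$ be an isomorphism between subgroups $A,B$ of $G$, and let $G^*=\langle G,t\mid t^{-1}at=\varphi(a),\ a\in A\rangle$. If $G^*$ is residually $p$, then there exists a central filtration $(G_i)$ of $G$, compatible with $(G,\varphi)$, such that for all $i<j$, all $a\in A\cap G_i$ and all $b\in B\cap G_i$, the order of the automorphism of $H(G_i/G_j,\ c_b\circ\varphi_{ij}\circ c_a)$ induced by $c_b\circ\varphi_{ij}\circ c_a$ is a power of $p$.
   Context: A group is residually $p$ if for every non-trivial element there is a homomorphism to a finite $p$-group not killing it. A filtration of $G$ is a sequence $(G_1,\dots,G_n)$ of normal subgroups with $G=G_1\supsetneq\cdots\supsetneq G_n=\{1\}$, with $G_i=\{1\}$ for $i>n$; it is central if $G_i/G_{i+1}$ is central in $G/G_{i+1}$ for each $i$; it is compatible with $(G,\varphi)$ if $\varphi$ restricts to an isomorphism $A\cap G_i\to B\cap G_i$ for each $i$. For $i<j$, $\varphi_{ij}\colon (A\cap G_i)G_j/G_j\to (B\cap G_i)G_j/G_j$ is the isomorphism induced by $\varphi$. For $g\in G$, $c_g(x)=g^{-1}xg$; for $a\in A\cap G_i$ (resp. $b\in B\cap G_i$), $c_a$ (resp. $c_b$) denotes the induced automorphism of $(A\cap G_i)G_j/G_j$ (resp. $(B\cap G_i)G_j/G_j$), so $c_b\circ\varphi_{ij}\circ c_a$ is an isomorphism between subgroups of $G_i/G_j$. For a group $Q$ and an isomorphism $\psi\colon A'\to B'$ between subgroups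 of $Q$, the core $H(Q,\psi)$ is $\bigcap_k H_k$ where $H_0=A'\cap B'$ and $H_{k+1}=\psi^{-1}(H_k)\cap H_k\cap\psi(H_k)$ (with $\psi^{-1}(H_k)=\{a\in A':\psi(a)\in H_k\}$); $\psi$ restricts to an automorphism of $H(Q,\psi)$. *)

(* Defs.v *)
From mathcomp Require Import all_boot all_fingroup all_solvable.
Set Implicit Arguments. Unset Strict Implicit. Unset Printing Implicit Defensive.
Import GroupScope.
Local Open Scope group_scope.

(* The HNN extension G* = < G, t | t^-1 a t = phi a, a in A >, presented as  *)
(* words over the letters g (g in G), t and t^-1, modulo the congruence       *)
(* generated by the multiplication table of G, t t^-1 = 1 = t^-1 t and the    *)
(* HNN relations.                                                             *)

Inductive hnn_letter (gT : Type) := HG of gT | HT of bool.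
(* HT true = t, HT false = t^-1 *)

Section HNN.
Variables (gT : finGroupType) (G A : {set gT}) (phi : gT -> gT).

Definition hnn_word_in (w : seq (hnn_letter gT)) : bool :=
  all (fun l => if l is HG g then g \in G else true) w.

Inductive hnn_step : seq (hnn_letter gT) -> seq (hnn_letter gT) -> Prop :=
| hnn_mul g h : g \in G -> h \in G -> hnn_step [:: HG g; HG h] [:: HG (g * h)]
| hnn_one : hnn_step [:: HG 1] [::]
| hnn_tti : hnn_step [:: HT _ true; HT _ false] [::]
| hnn_tit : hnn_step [:: HT _ false; HT _ true] [::]
| hnn_rel a : a \in A -> hnn_step [:: HT _ false; HG a; HT _ true] [:: HG (phi a)].

Inductive hnn_eq : seq (hnn_letter gT) -> seq (hnn_letter gT) -> Prop :=
| hnn_eq_step u v l r : hnn_step l r -> hnn_eq (u ++ l ++ v) (u ++ r ++ v)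
| hnn_eq_refl w : hnn_eq w w
| hnn_eq_sym w1 w2 : hnn_eq w1 w2 -> hnn_eq w2 w1
| hnn_eq_trans w1 w2 w3 : hnn_eq w1 w2 -> hnn_eq w2 w3 -> hnn_eq w1 w3.

End HNN.

Definition hnn_eval (gT rT : finGroupType) (f : gT -> rT) (x : rT)
    (w : seq (hnn_letter gT)) : rT :=
  foldr (fun l acc => (match l with
                       | HG g => f g
                       | HT true => x
                       | HT false => x^-1
                       end) * acc) 1 w.

(* G* is residually p: every non-trivial element of G* survives under some   *)
(* homomorphism to a finite p-group P. Homomorphisms G* -> P are exactly the   *)
(* pairs (f, x), f : G -> P a homomorphism, x in P, with x^-1 f(a) x = f(phi a). *)
Definition hnn_residually_p (p : nat) (gT : finGroupType) (G A : {group gT})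
    (phi : {morphism A >-> gT}) : Prop :=
  forall w : seq (hnn_letter gT), hnn_word_in G w ->
    ~ hnn_eq G A phi w [::] ->
    exists (rT : finGroupType) (P : {group rT}) (f : {morphism G >-> rT}) (x : rT),
      [/\ p.-group P, f @* G \subset P, x \in P,
          {in A, forall a, f a ^ x = f (phi a)} & hnn_eval f x w != 1].

(* Filtrations (indexed 1..n; Gs i = 1 for i > n)                           *)

Definition filtration (gT : finGroupType) (G : {group gT}) (n : nat)
    (Gs : nat -> {group gT}) : Prop :=
  [/\ (1 <= n)%N /\ Gs 1%N = G, Gs n = 1%G,
      (forall i, (1 <= i)%N -> Gs i <| G),
      (forall i, (1 <= i < n)%N -> Gs i.+1 \proper Gs i) &
      (forall i, (n < i)%N -> Gs i = 1%G)].

Definition central_filtration (gT : finGroupType) (G : {group gT}) (n : nat)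
    (Gs : nat -> {group gT}) : Prop :=
  forall i, (1 <= i)%N -> Gs i / Gs i.+1 \subset 'Z(G / Gs i.+1).

Definition compatible_filtration (gT : finGroupType) (A B : {group gT})
    (phi : {morphism A >-> gT}) (Gs : nat -> {group gT}) : Prop :=
  forall i, (1 <= i)%N -> phi @* (A :&: Gs i) = B :&: Gs i.

(* phi_ij : (A cap G_i)G_j/G_j -> (B cap G_i)G_j/G_j, induced by phi *)
Definition phi_ij (gT : finGroupType) (A : {group gT}) (phi : {morphism A >-> gT})
    (Gi Gj : {group gT}) (X : coset_of Gj) : coset_of Gj :=
  if [pick y in A :&: Gi | coset Gj y == X] is Some y then coset Gj (phi y) else 1.

(* c_b o phi_ij o c_a, with c_g(x) = g^-1 x g = x ^ g *)
Definition psi_ij (gT : finGroupType) (A : {group gT}) (phi : {morphism A >-> gT})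
    (Gi Gj : {group gT}) (a b : gT) (X : coset_of Gj) : coset_of Gj :=
  (@phi_ij _ _ phi Gi Gj (X ^ coset Gj a)) ^ coset Gj b.

Section Core.
Variables (T : finType) (A' B' : {set T}) (psi : T -> T).

Fixpoint core_seq (k : nat) : {set T} :=
  match k with
  | 0 => A' :&: B'
  | k.+1 => let H := core_seq k in
            [set x in A' | psi x \in H] :&: H :&: (psi @: (H :&: A'))
  end.

Definition in_core (x : T) : Prop := forall k, x \in core_seq k.

Definition core_aut_order (m : nat) : Prop :=
  [/\ (0 < m)%N, (forall x, in_core x -> iter m psi x = x) &
      (forall m', (0 < m' < m)%N -> exists x, in_core x /\ iter m' psi x != x)].
End Core.

(* Main.v *)
Require Import Defs.
From mathcomp Require Import all_boot all_fingroup all_solvable.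
From Stdlib Require Import Classical ClassicalEpsilon.
Set Implicit Arguments. Unset Strict Implicit. Unset Printing Implicit Defensive.
Import GroupScope.
Local Open Scope group_scope.

Lemma hnn_eval_cat (gT rT : finGroupType) (f : gT -> rT) (x : rT) s1 s2 :
  hnn_eval f x (s1 ++ s2) = hnn_eval f x s1 * hnn_eval f x s2.
Proof. by elim: s1 => [|l s IH] /=; rewrite ?mul1g // IH mulgA. Qed.

Lemma hnn_eq_eval (gT rT : finGroupType) (G A : {set gT}) (phi : gT -> gT)
   (f : gT -> rT) (x : rT) :
  {in G &, {morph f : u v / u * v}} -> f 1 = 1 ->
  {in A, forall a, x^-1 * f a * x = f (phi a)} ->
  forall w1 w2, hnn_eq G A phi w1 w2 -> hnn_eval f x w1 = hnn_eval f x w2.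
Proof.
move=> fM f1 fx w1 w2; elim=> //; last by move=> *; congruence.
- move=> u v l r st; rewrite !hnn_eval_cat; congr (_ * (_ * _)).
  case: st => /=.
  + by move=> g h Gg Gh; rewrite fM // !mulg1.
  + by rewrite f1 !mulg1.
  + by rewrite mulg1 mulgV.
  + by rewrite mulg1 mulVg.
  + by move=> a Aa; rewrite -fx // !mulg1 !mulgA.
Qed.
Lemma card_bij (T : finType) (X Y : {set T}) : #|X| = #|Y| ->
  exists h : T -> T, {in X &, injective h} /\ {in X, forall x, h x \in Y}.
Proof.
move=> cXY; exists (fun t => nth t (enum Y) (index t (enum X))).
have szX x : x \in X -> index x (enum X) < size (enum Y).
  by move=> Xx; rewrite -cardE -cXY cardE index_mem mem_enum.
split.
- move=> x y Xx Xy /=; rewrite (set_nth_default x) ?szX // => /eqP.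
  rewrite nth_uniq ?szX ?enum_uniq // => /eqP eqi.
  by rewrite -(nth_index x (_ : x \in enum X)) ?mem_enum // eqi nth_index ?mem_enum.
- by move=> x Xx /=; rewrite -mem_enum mem_nth ?szX.
Qed.

Section Embed.
Variables (gT : finGroupType) (A B : {group gT}) (phi : {morphism A >-> gT}).
Hypotheses (injphi : 'injm phi) (phiAB : phi @* A = B).

Definition rmul (g : gT) : {perm gT} := perm (mulIg g).
Lemma rmulE g y : rmul g y = y * g. Proof. by rewrite permE. Qed.
Lemma rmulM g h : rmul (g * h) = rmul g * rmul h.
Proof. by apply/permP => y; rewrite permM !rmulE mulgA. Qed.
Lemma rmul1 : rmul 1 = 1.
Proof. by apply/permP => y; rewrite rmulE perm1 mulg1. Qed.
Lemma rmul_inj : injective rmul.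
Proof. by move=> g h /permP/(_ 1); rewrite !rmulE !mul1g. Qed.

Lemma embed_x : exists x : {perm gT}, {in A, forall a, x^-1 * rmul a * x = rmul (phi a)}.
Proof.
have cAB : #|lcosets A [set: gT]| = #|lcosets B [set: gT]|.
  rewrite !card_lcosets; apply/eqP; rewrite -(eqn_pmul2l (cardG_gt0 A)).
  rewrite Lagrange ?subsetT //.
  have cA : #|A| = #|B| by rewrite -phiAB card_injm.
  by rewrite cA Lagrange ?subsetT.
have [h [hinj hmem]] := card_bij cAB.
pose xf nu := repr (h (nu *: A)) * phi ((repr (nu *: A))^-1 * nu).
have alA nu : (repr (nu *: A))^-1 * nu \in A.
  have := mem_repr nu (lcoset_refl A nu); rewrite mem_lcoset => /groupVr.
  by rewrite invMg invgK.
have CinA nu : nu *: A \in lcosets A [set: gT] by apply/lcosetsP; exists nu.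
have xfD nu : xf nu \in h (nu *: A).
  have [d _ Dd] := lcosetsP (hmem _ (CinA nu)).
  have : repr (h (nu *: A)) \in h (nu *: A) by rewrite Dd (mem_repr d) ?lcoset_refl.
  rewrite /xf Dd !mem_lcoset => H; rewrite mulgA groupM //.
  by rewrite -phiAB mem_morphim.
have xfinj : injective xf.
  move=> nu mu eqx.
  have eqC : nu *: A = mu *: A.
    apply: hinj; rewrite ?CinA //.
    have [d _ Dd] := lcosetsP (hmem _ (CinA nu)).
    have [e _ De] := lcosetsP (hmem _ (CinA mu)).
    have := xfD nu; have := xfD mu; rewrite -eqx Dd De => H1 H2.
    by rewrite -(lcoset_eqP H2); apply/lcoset_eqP.
  have a1 := alA nu; have a2 := alA mu; rewrite eqC in a1.
  move: eqx; rewrite /xf eqC => /mulgI /(injmP injphi).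
  by move/(_ a1 a2) /mulgI.
exists (perm xfinj) => a Aa; apply/permP => om.
idtac.
set nu := (perm xfinj)^-1 om.
have -> : om = perm xfinj nu by rewrite permKV.
rewrite !permM permK !permE /xf ?rmulE.
have eqC : (nu * a) *: A = nu *: A by rewrite lcosetM lcoset_id.
by rewrite eqC mulgA morphM ?mulgA // alA.
Qed.

End Embed.
Lemma ex_least (P : nat -> Prop) n : P n -> exists m, P m /\ forall k, k < m -> ~ P k.
Proof.
elim: n {-2}n (leqnn n) => [|N IH] n len Pn.
  by move: len Pn; rewrite leqn0 => /eqP -> P0; exists 0; split.
case: (classic (exists k, k < n /\ P k)) => [[k [ltk Pk]]|nk].
  by apply: (IH k) => //; rewrite -ltnS (leq_trans ltk).
by exists n; split => // k ltk Pk; apply: nk; exists k.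
Qed.

Lemma iter_period (T : Type) (f : T -> T) x m q :
  iter m f x = x -> iter (q * m) f x = x.
Proof. by move=> H; elim: q => // q IH; rewrite mulSn iterD IH H. Qed.

Lemma core_order (T : finType) (A' B' : {set T}) (psi : T -> T) p e :
  prime p -> (forall x, in_core A' B' psi x -> iter (p ^ e) psi x = x) ->
  exists m e', core_aut_order A' B' psi m /\ m = (p ^ e')%N.
Proof.
move=> pp Hper.
pose P m := 0 < m /\ forall x, in_core A' B' psi x -> iter m psi x = x.
have [m [[m0 Pm] minm]] : exists m, P m /\ forall k, k < m -> ~ P k.
  by apply: (ex_least (n := (p ^ e)%N)); split; rewrite ?expn_gt0 ?prime_gt0.
have dvd : (m %| p ^ e)%N.
  rewrite /dvdn; apply/eqP; case: (posnP ((p ^ e) %% m)) => [->//|r0].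
  exfalso; apply: (minm ((p ^ e) %% m)); first by rewrite ltn_mod.
  split=> // x cx; have := Hper x cx.
  rewrite {1}(divn_eq (p ^ e) m) addnC iterD iter_period //; exact: Pm.
have [e' _ me'] := dvdn_pfactor m e pp dvd.
exists m, e'; split => //; split => // k /andP [k0 km].
apply: NNPP => nex; apply: (minm k km); split => // x cx.
case: (eqVneq (iter k psi x) x) => // nx; by exfalso; apply: nex; exists x; split.
Qed.
Section Dedup.
Variables (gT : finGroupType) (G : {group gT}) (K : nat -> {group gT}) (N : nat).
Hypotheses (K1 : K 1 = G) (KS : forall k, 1 <= k -> K k.+1 \subset K k)
  (N1 : 1 <= N) (KN : K N = 1%G) (Knorm : forall k, 1 <= k -> K k <| G).

Lemma Kmono k l : 1 <= k -> k <= l -> K l \subset K k.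
Proof.
move=> k1 /subnK <-; elim: (l - k) => [|d IH]; first by rewrite add0n.
by rewrite addSn (subset_trans (KS _) IH) // (leq_trans k1) ?leq_addl.
Qed.

Lemma Kbig l : N <= l -> K l = 1%G.
Proof.
move=> Nl; apply: val_inj => /=; apply/trivgP.
by have := Kmono N1 Nl; rewrite KN.
Qed.

Definition fnd k := find (fun d => K (k + d).+1 != K k) (iota 0 N).
Definition nxt k := (k + fnd k)%N.

Lemma nxt_eq k : K (nxt k) = K k.
Proof.
rewrite /nxt; case E: (fnd k) => [|d]; first by rewrite addn0.
have : d < fnd k by rewrite E.
move/(before_find 0); rewrite nth_iota ?add0n.
  by move/negbFE/eqP; rewrite addnS.
by have := find_size (fun d => K (k + d).+1 != K k) (iota 0 N); rewrite size_iota -/(fnd k) E.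
Qed.

Lemma nxt_neq k : 1 <= k -> K k != 1%G -> K (nxt k).+1 != K k.
Proof.
move=> k1 Kk1; rewrite /nxt /fnd.
set s := iota 0 N; set a := (fun d => _).
case: (boolP (has a s)) => [hs|].
  by have := nth_find 0 hs; rewrite /a nth_iota // -(size_iota 0 N) -has_find.
rewrite has_find -leqNgt size_iota => ge.
have eqN : find a s = N by apply/eqP; rewrite eqn_leq ge -(size_iota 0 N) find_size.
have : N.-1 < find a s by rewrite eqN ltn_predL.
move/(before_find 0); rewrite nth_iota ?ltn_predL // add0n /a => /negbFE/eqP.
rewrite -addnS prednK // Kbig ?leq_addl // => E; rewrite -E eqxx in Kk1; by [].
Qed.

Fixpoint jdx i := if i is i'.+1 then (nxt (jdx i')).+1 else 1%N.

Lemma jdx_ge i : i < jdx i.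
Proof. by elim: i => //= i IH; rewrite ltnS /nxt (leq_trans IH) ?leq_addr. Qed.

Lemma jdx_mono i j : i <= j -> jdx i <= jdx j.
Proof.
move/subnK <-; elim: (j - i) => // d IH; rewrite addSn /=.
by rewrite (leq_trans IH) // /nxt leqW ?leq_addr.
Qed.

Definition Gs i := K (jdx i.-1).

Lemma dedup_prop : exists n, filtration G n Gs /\
  forall i, 1 <= i -> exists m, [/\ 1 <= m, K m = Gs i & K m.+1 = Gs i.+1].
Proof.
have jdx1 i : 1 <= jdx i by apply: leq_ltn_trans (jdx_ge i).
have exP : exists i, (0 < i) && (Gs i == 1%G).
  by exists N; rewrite N1 /Gs Kbig ?eqxx // (leq_trans _ (jdx_ge _)) // prednK.
case: (ex_minnP exP) => n /andP [n0 /eqP Gn] minn.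
exists n; split; last first.
  move=> i i1; exists (nxt (jdx i.-1)); rewrite /Gs nxt_eq /=.
  have -> : jdx i = (nxt (jdx i.-1)).+1 by rewrite -{1}(prednK i1).
  by split => //; apply: leq_trans (jdx1 i.-1) _; rewrite /nxt leq_addr.
split.
- by split => //; rewrite /Gs /= K1.
- exact: Gn.
- by move=> i i1; apply: Knorm.
- move=> i /andP [i1 iln]; rewrite properEneq.
  have Gi1 : Gs i != 1%G.
    by apply/negP => /eqP E; have := minn i; rewrite (leq_trans i1) // E eqxx /= => /(_ isT); rewrite leqNgt iln.
  rewrite /Gs /= -(prednK i1) /=; rewrite /Gs in Gi1.
  apply/andP; split.
    apply/negP => /eqP E; have : K (nxt (jdx i.-1)).+1 = K (jdx i.-1) by apply: val_inj.
    by move/eqP; rewrite (negPf (nxt_neq (jdx1 _) Gi1)).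
  rewrite -[X in _ \subset gval X]nxt_eq KS //; apply: leq_trans (jdx1 i.-1) _; by rewrite /nxt leq_addr.
- move=> i ni; apply: val_inj => /=; apply/trivgP.
  have := @Kmono (jdx n.-1) (jdx i.-1) (jdx1 _).
  rewrite -/(Gs n) Gn => -> //.
  by rewrite jdx_mono // -!subn1 leq_sub2r // ltnW.
Qed.

End Dedup.

Section Main.
Variables (p : nat) (gT : finGroupType) (G A B : {group gT}) (phi : {morphism A >-> gT}).
Hypotheses (pp : prime p) (pG : p.-group G) (sAG : A \subset G) (sBG : B \subset G)
  (injphi : 'injm phi) (phiAB : phi @* A = B) (resp : @hnn_residually_p p gT G A phi).

Record hom := Hom { hT : finGroupType; hP : {group hT}; hf : {morphism G >-> hT}; hx : hT }.

Definition good (r : hom) := [/\ p.-group (hP r), hf r @* G \subset hP r, hx r \in hP r &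
  {in A, forall a, hf r a ^ hx r = hf r (phi a)}].

Lemma exists_good g : exists r, good r /\ (g \in G -> g != 1 -> hf r g != 1).
Proof.
case: (boolP ((g \in G) && (g != 1))) => [/andP [Gg ng1] | ng].
  have nw : ~ hnn_eq G A phi [:: HG g] [::].
    have [x hx] := embed_x injphi phiAB.
    move/(hnn_eq_eval (f := @rmul gT) (x := x)); rewrite /= => H.
    have /H : {in G &, {morph @rmul gT : u v / u * v}} by move=> u v _ _; exact: rmulM.
    move/(_ (@rmul1 gT) hx); rewrite mulg1 => E.
    by move: ng1; rewrite -(@rmul_inj gT g 1) ?eqxx // E rmul1.
  have wi : hnn_word_in G [:: HG g] by rewrite /hnn_word_in /= Gg.
  have [rT [P [f [x [pP fGP xP fx ev]]]]] := resp wi nw.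
  exists (Hom P f x); split => //; by move: ev; rewrite /= mulg1.
exists (Hom [1 gT]%G (@triv_morph gT gT G) 1); split.
  split => //=; first exact: pgroup1.
    by rewrite morphim_trivm.
  by move=> a Aa; rewrite conjg1.
by move=> Gg g1; move: ng; rewrite Gg g1.
Qed.

Definition F (g : gT) : hom := proj1_sig (constructive_indefinite_description _ (exists_good g)).
Lemma F_good g : good (F g).
Proof. by rewrite /F; case: constructive_indefinite_description => r [] . Qed.
Lemma F_sep g : g \in G -> g != 1 -> hf (F g) g != 1.
Proof. by rewrite /F; case: constructive_indefinite_description => r []. Qed.

Definition Kset k := [set y in G | [forall g : gT, hf (F g) y \in 'L_k(hP (F g))]].

Lemma Kgs k : group_set (Kset k).
Proof.
apply/group_setP; split.
  by rewrite inE group1; apply/forallP => g; rewrite morph1 group1.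
move=> y z; rewrite !inE => /andP [Gy /forallP Hy] /andP [Gz /forallP Hz].
by rewrite groupM //; apply/forallP => g; rewrite morphM // groupM.
Qed.

Definition K k := Group (Kgs k).

Lemma memK k y : (y \in K k) = (y \in G) && [forall g : gT, hf (F g) y \in 'L_k(hP (F g))].
Proof. by rewrite inE. Qed.

Lemma fP g y : y \in G -> hf (F g) y \in hP (F g).
Proof. by move=> Gy; have [_ sfP _ _] := F_good g; rewrite (subsetP sfP) ?mem_morphim. Qed.

Lemma K1 : K 1 = G.
Proof.
apply: val_inj; apply/setP => y /=; rewrite inE; case Gy: (y \in G) => //=.
by apply/forallP => g; rewrite lcn1 fP.
Qed.

Lemma KS k : K k.+1 \subset K k.
Proof.
apply/subsetP => y; rewrite !memK => /andP [Gy /forallP H]; rewrite Gy.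
by apply/forallP => g; apply: (subsetP (lcn_subS _ _)); exact: H.
Qed.

Lemma Knorm k : K k <| G.
Proof.
apply/andP; split; first by apply/subsetP => y; rewrite memK => /andP [].
apply/subsetP => g Gg; rewrite inE; apply/subsetP => _ /imsetP [y Ky ->].
move: Ky; rewrite !memK => /andP [Gy /forallP H]; rewrite groupJ //.
apply/forallP => h; rewrite morphJ // memJ_norm ?H //.
by apply: (subsetP (lcn_norm _ _)); rewrite fP.
Qed.

Lemma Kcomm k : [~: K k, G] \subset K k.+1.
Proof.
rewrite gen_subG; apply/subsetP => _ /imset2P [y g Ky Gg ->].
move: Ky; rewrite !memK => /andP [Gy /forallP H]; rewrite groupR //.
apply/forallP => h; rewrite morphR //.
by apply: (subsetP (lcnSnS _ _)); rewrite mem_commg ?fP.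
Qed.

Lemma Kcompat k : phi @* (A :&: K k) = B :&: K k.
Proof.
apply/setP => z; apply/idP/idP.
  case/morphimP => a Aa /setIP [_ Ka] ->.
  have Ga := subsetP sAG a Aa.
  have Bz : phi a \in B by rewrite -phiAB mem_morphim.
  rewrite inE Bz memK (subsetP sBG) //=; apply/forallP => g.
  have [_ _ xP fx] := F_good g; rewrite -fx // memJ_norm.
    by move: Ka; rewrite memK => /andP [_ /forallP].
  exact: (subsetP (lcn_norm _ _)).
case/setIP => Bz Kz; move: (Bz); rewrite -phiAB => /morphimP [a _ Aa Ez]; rewrite Ez in Kz *.
apply: mem_morphim => //; rewrite inE Aa memK (subsetP sAG) //=.
apply/forallP => g; have [_ _ xP fx] := F_good g.
have -> : hf (F g) a = hf (F g) (phi a) ^ (hx (F g))^-1 by rewrite -fx // conjgK.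
rewrite memJ_norm; first by move: Kz; rewrite memK => /andP [_ /forallP /(_ g)].
by apply: (subsetP (lcn_norm _ _)); rewrite groupV.
Qed.


Lemma KN : K (\max_(g : gT) nil_class (hP (F g))).+1 = 1%G.
Proof.
apply: val_inj; apply/trivgP/subsetP => y; rewrite memK => /andP [Gy /forallP H].
rewrite inE; apply/negPn/negP => ny; move: (F_sep Gy ny).
suff -> : hf (F y) y = 1 by rewrite eqxx.
have [pP _ _ _] := F_good y.
have nilP := pgroup_nil pP.
have L1 : 'L_(nil_class (hP (F y))).+1(hP (F y)) = 1 by apply/lcn_nil_classP.
have le : (nil_class (hP (F y))).+1 <= (\max_(g : gT) nil_class (hP (F g))).+1.
  by rewrite ltnS (@leq_bigmax _ (fun g => nil_class (hP (F g))) y).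
by move: (subsetP (lcn_sub_leq _ le) _ (H y)); rewrite L1 => /set1P.
Qed.

Section CoreSec.
Variables (k l : nat) (a b : gT).
Hypotheses (aAK : a \in A :&: K k) (bBK : b \in B :&: K k).

Local Notation L := (K l).
Local Notation A' := (((A :&: K k) * K l) / K l).
Local Notation B' := (((B :&: K k) * K l) / K l).
Local Notation psi := (@psi_ij gT A phi (K k) (K l) a b).

Definition cc g := hf (F g) a * hx (F g) * hf (F g) b.

Lemma Ga : a \in G. Proof. by case/setIP: aAK => /(subsetP sAG). Qed.
Lemma Gb : b \in G. Proof. by case/setIP: bBK => /(subsetP sBG). Qed.

Lemma ccP g : cc g \in hP (F g).
Proof. by have [_ _ xP _] := F_good g; rewrite !groupM ?fP ?Ga ?Gb. Qed.

Lemma psi_step X y : X \in A' -> y \in G -> coset L y = X ->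
  exists z, [/\ z \in G, coset L z = psi X &
    forall g, exists2 m, m \in 'L_l(hP (F g)) & hf (F g) z = m * hf (F g) y ^ cc g].
Proof.
move=> XA Gy yX.
have nLG : G \subset 'N(L) := normal_norm (Knorm l).
have nKG : G \subset 'N(K k) := normal_norm (Knorm k).
have Ga := Ga; have Gb := Gb.
have Aa : a \in A by case/setIP: aAK.
case/morphimP: XA => w Nw /mulsgP [y0 l0 y0AK l0L Ew] Xw.
have eqXa : X ^ coset L a = coset L (y ^ a).
  by rewrite -yX morphJ // (subsetP nLG).
have y0a : y0 ^ a \in A :&: K k.
  case/setIP: y0AK => Ay0 Ky0; rewrite inE groupJ //= memJ_norm //.
  exact: (subsetP nKG).
have Gy0 : y0 \in G by case/setIP: y0AK => /(subsetP sAG).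
have Gl0 : l0 \in G by apply: (subsetP (normal_sub (Knorm l))).
have y0ac : coset L (y0 ^ a) = X ^ coset L a.
  rewrite Xw Ew -morphJ ?(subsetP nLG) ?groupM // conjMg [RHS]coset_kerr //.
  by rewrite memJ_norm // (subsetP nLG).
rewrite /psi_ij /phi_ij.
case: pickP => [y' /andP [y'AK /eqP ey'] | none]; last first.
  by have := none (y0 ^ a); rewrite y0a y0ac eqxx.
have Ay' : y' \in A by case/setIP: y'AK.
have Gy' := subsetP sAG _ Ay'.
have Bphi : phi y' \in B by rewrite -phiAB mem_morphim.
have Gphi := subsetP sBG _ Bphi.
exists (phi y' ^ b); split; first by rewrite groupJ.
  by rewrite morphJ // (subsetP nLG).
move=> g; have [_ _ xP fx] := F_good g.
rewrite eqXa in ey'.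
have [l1 l1L El1] := kercoset_rcoset (subsetP nLG _ Gy') (subsetP nLG _ (groupJ Gy Ga)) ey'.
have Gl1 : l1 \in G by apply: (subsetP (normal_sub (Knorm l))).
exists (hf (F g) l1 ^ (hx (F g) * hf (F g) b)).
  rewrite memJ_norm; first by move: l1L; rewrite memK => /andP [_ /forallP /(_ g)].
  by apply: (subsetP (lcn_norm _ _)); rewrite groupM ?fP.
rewrite morphJ // -fx // El1 morphM ?groupJ // morphJ //.
by rewrite /cc !conjgM (conjMg (hf (F g) l1)) conjMg.
Qed.

Lemma core_psi X : in_core A' B' psi X -> in_core A' B' psi (psi X).
Proof. by move=> cX n; case/setIP: (cX n.+1) => /setIP [/setIdP [_ h] _] _. Qed.

Lemma core_A X : in_core A' B' psi X -> X \in A'.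
Proof. by move=> cX; case/setIP: (cX 0). Qed.

Lemma psi_iter X y n : in_core A' B' psi X -> y \in G -> coset L y = X ->
  exists z, [/\ z \in G, coset L z = iter n psi X &
    forall g, exists2 m, m \in 'L_l(hP (F g)) & hf (F g) z = m * hf (F g) y ^ (cc g ^+ n)].
Proof.
move=> cX Gy yX; elim: n => [|n [z [Gz ez Hz]]].
  by exists y; split => // g; exists 1; rewrite ?group1 // expg0 conjg1 mul1g.
have cz : in_core A' B' psi (iter n psi X).
  by elim: n {z Gz ez Hz} => // n IH; exact: core_psi.
have [z' [Gz' ez' Hz']] := psi_step (core_A cz) Gz ez.
exists z'; split => //.
move=> g; have [m' m'L e'] := Hz' g; have [m mL e] := Hz g.
exists (m' * m ^ cc g).
  rewrite groupM // memJ_norm //; apply: (subsetP (lcn_norm _ _)); exact: ccP.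
by rewrite e' e conjMg mulgA expgSr (conjgM (hf (F g) y)).
Qed.

Lemma core_main : exists m e, core_aut_order A' B' psi m /\ m = (p ^ e)%N.
Proof.
apply: (core_order (e := \sum_(g : gT) logn p #|hP (F g)|)) => // X cX.
have /morphimP [w Nw wAK Xw] := core_A cX.
have Gw : w \in G.
  apply: (subsetP (mul_subG _ _)) wAK.
    by apply: subset_trans (subsetIl _ _) sAG.
  exact: normal_sub (Knorm l).
have [z [Gz ez Hz]] := psi_iter (p ^ (\sum_(g : gT) logn p #|hP (F g)|)) cX Gw (esym Xw).
rewrite -ez Xw.
have -> : z = (z * w^-1) * w by rewrite mulgKV.
rewrite coset_kerl // memK groupM ?groupV //=; apply/forallP => g.
have [m mL e] := Hz g.
have c1 : cc g ^+ (p ^ (\sum_(g : gT) logn p #|hP (F g)|)) = 1.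
  apply/eqP; rewrite -order_dvdn; apply: dvdn_trans (order_dvdG (ccP g)) _.
  have [pP _ _ _] := F_good g.
  rewrite (card_pgroup pP) dvdn_exp2l // (bigD1 g) //= leq_addr //.
by rewrite morphM ?groupV // morphV // e c1 conjg1 mulgK.
Qed.

End CoreSec.

Lemma main_result : exists (n : nat) (Gs : nat -> {group gT}),
    [/\ filtration G n Gs, central_filtration G n Gs,
        @compatible_filtration gT A B phi Gs &
        forall i j, (1 <= i)%N -> (i < j)%N ->
        forall a b, a \in A :&: Gs i -> b \in B :&: Gs i ->
          exists m e,
            core_aut_order (((A :&: Gs i) * Gs j) / Gs j)
                           (((B :&: Gs i) * Gs j) / Gs j)
                           (@psi_ij gT A phi (Gs i) (Gs j) a b) m
            /\ m = (p ^ e)%N].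
Proof.
have [n [filt props]] := @dedup_prop gT G K _ K1 (fun k _ => KS k) (ltn0Sn _) KN (fun k _ => Knorm k).
exists n, (Gs K (\max_(g : gT) nil_class (hP (F g))).+1); split => //.
- move=> i i1; have [m [m1 Km Km1]] := props i i1; rewrite -Km -Km1.
  by rewrite subsetI quotientS ?(normal_sub (Knorm m)) ?quotient_cents2r ?Kcomm.
- by move=> i _; exact: Kcompat.
- by move=> i j _ _ a b aA bB; exact: core_main aA bB.
Qed.

End Main.

Theorem proposition1p4 (p : nat) (gT : finGroupType) (G A B : {group gT})
    (phi : {morphism A >-> gT}) :
  prime p -> p.-group G -> A \subset G -> B \subset G ->
  'injm phi -> phi @* A = B ->
  @hnn_residually_p p gT G A phi ->
  exists (n : nat) (Gs : nat -> {group gT}),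
    [/\ filtration G n Gs, central_filtration G n Gs,
        @compatible_filtration gT A B phi Gs &
        forall i j, (1 <= i)%N -> (i < j)%N ->
        forall a b, a \in A :&: Gs i -> b \in B :&: Gs i ->
          exists m e,
            core_aut_order (((A :&: Gs i) * Gs j) / Gs j)
                           (((B :&: Gs i) * Gs j) / Gs j)
                           (@psi_ij gT A phi (Gs i) (Gs j) a b) m
            /\ m = (p ^ e)%N].
Proof. by move=> *; apply: main_result. Qed.
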